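(* Let $m\ge3$ be odd, let $s$ be an even positive integer not divisible by $4$, $n=sm$, and $\Gamma=C_n[mK_1]$. Define $$\sigma_1=(1,1,\dots,1,tc^{-1})r,\qquad \sigma_2=(t,\beta_2,\beta_3,\dots,\beta_n)z,\qquad G=\langle\sigma_1,\sigma_2\rangle,$$ where for $2\le i\le n$, $\beta_i=c$ if $i\equiv0$ or $3\pmod 4$ and $\beta_i=c^{-1}$ if $i\equiv1$ or $2\pmod4$ (so $\sigma_2=(t,c^{-1},c,c,c^{-1},c^{-1},\dots,c,c,c^{-1},c^{-1})z$). Then $\sigma_1$ has order $2n$, $\sigma_2$ has order $2m$, $\sigma_1\sigma_2$ has order $2$, and $|G|=4m^2n$.
   Context: $C_n[mK_1]$ is the graph with vertex set $\{1,\dots,n\}\times\{1,\dots,m\}$ in which $(i_1,j_1)$ is adjacent to $(i_2,j_2)$ if and only if $i_1\equiv i_2\pm1\pmod n$ (residues mod $n$ taken in $\{1,\dots,n\}$). Permutations act on the right ($x\alpha$ is the image of $x$) and products are composed left to right, both in $S_m$ and in $\mathrm{Aut}(\Gamma)$. For $\alpha_1,\dots,\alpha_n\in S_m$ and a permutation $x$ of $\{1,\dots,n\}$ in the dihedral group $D_n=\langle r,z\rangle$, $(\alpha_1,\dots,\alpha_n)x$ denotes the automorphism of $\Gamma$ mapping $(i,j)\mapsto(ix,\,j\alpha_i)$; $1$ denotes an identity permutation. Here $c=(1\,2\,\cdots\,m)\in S_m$; $t\in S_m$ fixes $1$ and maps $j\mapsto m-j+2$ for $2\le j\le m$; $r$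 is the permutation $i\mapsto i+1 \pmod n$ of $\{1,\dots,n\}$; and $z$ fixes $1$ and maps $j\mapsto n-j+2$ for $2\le j\le n$. *)

(* Defs.v *)
(* Vertices of C_n[mK_1] are encoded 0-indexed:
   (i, j) in {1..n} x {1..m} is (i-1, j-1) : 'I_n * 'I_m. *)
From mathcomp Require Import all_boot all_fingroup.
From mathcomp Require Import zify.
Set Implicit Arguments. Unset Strict Implicit. Unset Printing Implicit Defensive.

Lemma modS_small k a : a < k -> a.+1 %% k = if a.+1 == k then 0 else a.+1.
Proof. move=> H; case: eqP => [->|ne]; first by rewrite modnn. by rewrite modn_small; lia. Qed.
Lemma modB_small k a : a < k -> (k - a) %% k = if a == 0 then 0 else k - a.
Proof. move=> H; case: eqP => [->|ne]; first by rewrite subn0 modnn. by rewrite modn_small; lia. Qed.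

Local Lemma pos_ord k (j : 'I_k) : 0 < k.
Proof. by apply: leq_ltn_trans (ltn_ord j). Qed.

Definition rot_fun k (j : 'I_k) : 'I_k := Ordinal (ltn_pmod j.+1 (pos_ord j)).
Lemma rot_inj k : injective (@rot_fun k).
Proof.
move=> [a Ha] [b Hb] /(congr1 val) /= E; apply/val_inj => /=.
move: E; rewrite !modS_small //; do 2 case: eqP; lia.
Qed.
Definition rotp k : {perm 'I_k} := perm (@rot_inj k).

(* reflection fixing the first point: 1-indexed j |-> k - j + 2 (j >= 2), 1 |-> 1;
   0-indexed j |-> (k - j) mod k *)
Definition refl_fun k (j : 'I_k) : 'I_k := Ordinal (ltn_pmod (k - j) (pos_ord j)).
Lemma refl_inj k : injective (@refl_fun k).
Proof.
move=> [a Ha] [b Hb] /(congr1 val) /= E; apply/val_inj => /=.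
move: E; rewrite !modB_small //; do 2 case: eqP; lia.
Qed.
Definition reflp k : {perm 'I_k} := perm (@refl_inj k).

Definition cyc m : {perm 'I_m} := rotp m.
Definition tt_ m : {perm 'I_m} := reflp m.
Definition r_ n : {perm 'I_n} := rotp n.
Definition z_ n : {perm 'I_n} := reflp n.

(* (alpha_1, ..., alpha_n) x : (i, j) |-> (i x, j alpha_i).
   MathComp permutations compose left to right ((p * q) x = q (p x)),
   matching the paper's convention. *)
Definition wr_fun n m (a : 'I_n -> {perm 'I_m}) (x : {perm 'I_n})
  (v : 'I_n * 'I_m) : 'I_n * 'I_m := (x v.1, a v.1 v.2).
Lemma wr_inj n m a x : injective (@wr_fun n m a x).
Proof.
move=> [i1 j1] [i2 j2] [/perm_inj E1]; subst i2 => /perm_inj ->; done.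
Qed.
Definition wr n m a x : {perm 'I_n * 'I_m} := perm (@wr_inj n m a x).

Definition sigma1 n m : {perm 'I_n * 'I_m} :=
  wr (fun i : 'I_n => if i == n.-1 :> nat then (tt_ m * (cyc m)^-1)%g else 1%g) (r_ n).

Definition beta m (i : nat) : {perm 'I_m} :=
  if (i %% 4 == 0) || (i %% 4 == 3) then cyc m else (cyc m)^-1%g.

(* sigma_2 = (t, beta_2, ..., beta_n) z ; 0-indexed position i0 is 1-indexed i0+1 *)
Definition sigma2 n m : {perm 'I_n * 'I_m} :=
  wr (fun i : 'I_n => if i == 0 :> nat then tt_ m else beta m i.+1) (z_ n).

(* Main.v *)
Require Import Defs.
From mathcomp Require Import all_boot all_fingroup.
From mathcomp Require Import all_order all_algebra cyclic zify ring.
Import GRing.Theory.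
Set Implicit Arguments. Unset Strict Implicit. Unset Printing Implicit Defensive.


Lemma gen_closed (gT : finGroupType) (A S : {set gT}) :
  1%g \in S -> (forall s x, s \in S -> x \in A -> (s * x)%g \in S) -> (<<A>> \subset S)%g.
Proof.
move=> S1 SA.
have gH : group_set [set g | [forall s in S, (s * g)%g \in S]].
  apply/group_setP; split.
    by rewrite inE; apply/forall_inP => s Ss; rewrite mulg1.
  move=> x y; rewrite !inE => /forall_inP Hx /forall_inP Hy.
  apply/forall_inP => s Ss; rewrite mulgA; apply: Hy; exact: Hx.
have: (<<A>> \subset Group gH)%g.
  rewrite gen_subG; apply/subsetP => x Ax; rewrite inE; apply/forall_inP => s Ss; exact: SA.
move/subsetP => sub; apply/subsetP => x /sub; rewrite inE => /forall_inP H.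
by rewrite -(mul1g x); apply: H.
Qed.

Section Main.
Variables m n : nat.
Hypothesis Hm : (2 < m)%N.
Hypothesis Hn : (n %% 4 = 2)%N.
Hypothesis Hn3 : (2 < n)%N.

Local Open Scope ring_scope.

Definition zm (j : 'I_m) : 'Z_m := (val j)%:R.

Lemma m1 : (1 < m)%N. Proof. lia. Qed.

Lemma zm_inj : injective zm.
Proof.
move=> x y /(congr1 (@nat_of_ord _)); rewrite /zm !val_Zp_nat ?m1 // !modn_small; try exact: ltn_ord.
by move/val_inj.
Qed.

Lemma zm_cyc j : zm (cyc m j) = zm j + 1.
Proof. by rewrite /zm /cyc /rotp permE /= Zp_nat_mod ?m1 // mulrS addrC. Qed.

Lemma zm_tt j : zm (tt_ m j) = - zm j.
Proof.
rewrite /zm /tt_ /reflp permE /= Zp_nat_mod ?m1 // natrB ?(ltnW (ltn_ord j)) //.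
by rewrite pchar_Zp ?m1 // sub0r.
Qed.

Lemma zm_cycV j : zm ((cyc m)^-1%g j) = zm j - 1.
Proof. by rewrite -{2}(permKV (cyc m) j) zm_cyc addrK. Qed.

Lemma zm_cycX k j : zm ((cyc m ^+ k)%g j) = zm j + k%:R.
Proof.
elim: k => [|k IH]; first by rewrite expg0 perm1 addr0.
by rewrite expgSr permM zm_cyc IH mulrS; ring.
Qed.

Definition sg (e : bool) (x : 'Z_m) := if e then - x else x.

Definition aff (e : bool) (x : 'Z_m) : {perm 'I_m} :=
  ((if e then tt_ m else 1) * cyc m ^+ val x)%g.

Lemma zm_aff e x j : zm (aff e x j) = sg e (zm j) + x.
Proof.
rewrite /aff permM zm_cycX natr_Zp; case: e => /=; first by rewrite zm_tt.
by rewrite perm1.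
Qed.

Definition theta (i : nat) : 'Z_m := if (i %% 4 < 2)%N then 1 else -1.
Definition bet (i : nat) : 'Z_m :=
  if ((i %% 4 == 0) || (i %% 4 == 3))%N then 1 else -1.
Definition sh (p q : 'Z_m) (e : bool) (i : nat) : 'Z_m :=
  theta i * (if odd i then q else p) - (if e then 1 else 0).
Definition kern p q e : {perm 'I_n * 'I_m} :=
  wr (fun i : 'I_n => aff e (sh p q e (val i))) 1%g.

Definition fib (v : 'I_n * 'I_m) : nat := val v.1.
Definition sec (v : 'I_n * 'I_m) : 'Z_m := zm v.2.
Lemma fib_lt v : (fib v < n)%N. Proof. exact: ltn_ord. Qed.

Lemma kern1 p q e (v : 'I_n * 'I_m) : fib (kern p q e v) = fib v.
Proof. by rewrite /fib /kern /wr permE /wr_fun perm1. Qed.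
Lemma kern2 p q e (v : 'I_n * 'I_m) : sec (kern p q e v) = sg e (sec v) + sh p q e (fib v).
Proof. by rewrite /fib /sec /kern /wr permE /wr_fun /= zm_aff. Qed.

Lemma pext (v w : 'I_n * 'I_m) : fib v = fib w -> sec v = sec w -> v = w.
Proof. by case: v w => [i j] [i' j']; rewrite /fib /sec /= => /val_inj -> /zm_inj ->. Qed.

Notation a := (sigma1 n m).
Notation b := (sigma2 n m).

Lemma a1 (v : 'I_n * 'I_m) : fib (a v) = ((fib v).+1 %% n)%N.
Proof. by rewrite /fib /sigma1 /wr permE /wr_fun /= /r_ /rotp permE. Qed.
Lemma a2 (v : 'I_n * 'I_m) : sec (a v) = if (fib v == n.-1)%N then - sec v - 1 else sec v.
Proof.
rewrite /fib /sec /sigma1 /wr permE /wr_fun /=; case: ifP => _; last by rewrite perm1.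
by rewrite permM zm_cycV zm_tt.
Qed.
Lemma b1 (v : 'I_n * 'I_m) : fib (b v) = ((n - fib v) %% n)%N.
Proof. by rewrite /fib /sigma2 /wr permE /wr_fun /= /z_ /reflp permE. Qed.
Lemma b2 (v : 'I_n * 'I_m) : sec (b v) = if (fib v == 0)%N then - sec v else sec v + bet (fib v).+1.
Proof.
rewrite /fib /sec /sigma2 /wr permE /wr_fun /=; case: ifP => _; first by rewrite zm_tt.
rewrite /beta /bet; case: ifP => _; first by rewrite zm_cyc.
by rewrite zm_cycV.
Qed.


Lemma theta_lo i : (i %% 4 < 2)%N -> theta i = 1.
Proof. by rewrite /theta => ->. Qed.
Lemma theta_hi i : (2 <= i %% 4)%N -> theta i = -1.
Proof. by rewrite /theta leqNgt => /negbTE ->. Qed.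
Lemma bet_p i : ((i %% 4 == 0) || (i %% 4 == 3))%N -> bet i = 1.
Proof. by rewrite /bet => ->. Qed.
Lemma bet_m i : ((i %% 4 == 1) || (i %% 4 == 2))%N -> bet i = -1.
Proof. rewrite /bet => H; case: ifP => //; lia. Qed.
Lemma odd_t i : (i %% 2 = 1)%N -> odd i = true.
Proof. by rewrite modn2; case: (odd i). Qed.
Lemma odd_f i : (i %% 2 = 0)%N -> odd i = false.
Proof. by rewrite modn2; case: (odd i). Qed.

Ltac simp4 := repeat match goal with
 | |- context [theta ?x] => first [ rewrite (theta_lo (i:=x)); [|lia] | rewrite (theta_hi (i:=x)); [|lia]]
 | |- context [bet ?x] => first [ rewrite (bet_p (i:=x)); [|lia] | rewrite (bet_m (i:=x)); [|lia]]
 | |- context [odd ?x] => first [ rewrite (odd_t (i:=x)); [|lia] | rewrite (odd_f (i:=x)); [|lia]]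
 end.

Lemma kernM p q e p' q' e' :
  (kern p q e * kern p' q' e' = kern (sg e' p + p') (sg e' q + q') (e (+) e'))%g.
Proof.
apply/permP => v; apply: pext; rewrite !permM. rewrite !kern1 //.
rewrite !kern2 kern1 /sh /sg.
case: e e' => [] [] /=; case: (odd _); ring.
Qed.

Lemma aK p q e : (a * kern p q e = kern q (- p) e * a)%g.
Proof.
apply/permP => v; apply: pext; rewrite !permM.
  by rewrite kern1 !a1 kern1.
have Hi := fib_lt v.
rewrite kern2 a2 a1 a2 kern2 kern1 modS_small //.
case: eqP => H1; case: eqP => H2 //; try lia.
  rewrite /sh /sg; simp4; case: e; rewrite /=; ring.
rewrite /sh /sg.
have: (fib v %% 4 = 0 \/ fib v %% 4 = 1 \/ fib v %% 4 = 2 \/ fib v %% 4 = 3)%N by lia.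
case=> [h|[h|[h|h]]]; simp4; case: e; rewrite /=; ring.
Qed.

Lemma a1' v : fib (a v) = if (fib v == n.-1)%N then 0%N else (fib v).+1.
Proof. rewrite a1 modS_small ?fib_lt //; case: eqP; case: eqP => //; lia. Qed.
Lemma b1' v : fib (b v) = if (fib v == 0)%N then 0%N else (n - fib v)%N.
Proof. by rewrite b1 modB_small ?fib_lt. Qed.

Ltac splitif := repeat match goal with |- context [if ?c then _ else _] =>
  lazymatch c with context [if _ then _ else _] => fail | _ =>
  let H := fresh "Hc" in case H: c end end.

Lemma aXE k v : (k <= n)%N ->
  fib ((a ^+ k)%g v) = (if (fib v + k < n)%N then fib v + k else fib v + k - n)%N /\
  sec ((a ^+ k)%g v) = if (fib v + k < n)%N then sec v else - sec v - 1.
Proof.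
have Hv := fib_lt v.
elim: k => [|k IH] Hk; first by rewrite expg0 perm1 addn0 Hv.
have [IH1 IH2] := IH (ltnW Hk).
rewrite expgSr permM a1' a2 IH1 IH2.
case: (ltnP (fib v + k) n) => H1; case: (ltnP (fib v + k.+1) n) => H2; splitif;
  split; try lia; try ring.
Qed.

Lemma aN : (a ^+ n = kern 0 0 true)%g.
Proof.
apply/permP => v; have [H1 H2] := aXE v (leqnn n).
have Hv := fib_lt v.
apply: pext; rewrite ?kern1 ?kern2.
  rewrite H1; splitif; lia.
rewrite H2; splitif; try lia.
rewrite /sg /sh /=; case: (odd _); ring.
Qed.

Lemma kern0 : kern 0 0 false = 1%g.
Proof.
apply/permP => v; apply: pext; rewrite perm1 ?kern1 ?kern2 //.
rewrite /sg /sh /=; case: (odd _); ring.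
Qed.

Lemma bb : (b * b = kern 0 (-2) false)%g.
Proof.
apply/permP => v; have Hv := fib_lt v; apply: pext; rewrite permM.
  rewrite kern1 b1' b1'; splitif; lia.
rewrite kern2 b2 b1' b2; rewrite /sg /sh.
have: (fib v %% 4 = 0 \/ fib v %% 4 = 1 \/ fib v %% 4 = 2 \/ fib v %% 4 = 3)%N by lia.
case=> [h|[h|[h|h]]]; splitif; try lia; simp4; ring.
Qed.

Lemma abab : ((a * b) * (a * b) = 1)%g.
Proof.
apply/permP => v; have Hv := fib_lt v; apply: pext; rewrite perm1 !permM.
  rewrite b1' a1' b1' a1'; splitif; lia.
rewrite b2 a2 b2 a2; do 3 rewrite ?b1' ?a1'.
have: (fib v %% 4 = 0 \/ fib v %% 4 = 1 \/ fib v %% 4 = 2 \/ fib v %% 4 = 3)%N by lia.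
case=> [h|[h|[h|h]]]; splitif; try lia; simp4; ring.
Qed.

Hypothesis Hmodd : odd m.

Lemma n0 : (0 < n)%N. Proof. lia. Qed.
Definition i0 : 'I_n := Ordinal n0.
Lemma n1 : (1 < n)%N. Proof. lia. Qed.
Definition i1 : 'I_n := Ordinal n1.
Lemma m0 : (0 < m)%N. Proof. lia. Qed.
Definition j0 : 'I_m := Ordinal m0.
Definition j1 : 'I_m := Ordinal m1.

Lemma zm_j0 : zm j0 = 0. Proof. by []. Qed.
Lemma zm_j1 : zm j1 = 1. Proof. by []. Qed.

Lemma two_neq0 : (2 : 'Z_m) != 0.
Proof.
apply/eqP => /(congr1 (@nat_of_ord _)); rewrite val_Zp_nat ?m1 // modn_small //.
Qed.

Lemma kern_inj p q e p' q' e' : kern p q e = kern p' q' e' -> [/\ p = p', q = q' & e = e'].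
Proof.
move=> E.
have F (v : 'I_n * 'I_m) : sec (kern p q e v) = sec (kern p' q' e' v) by rewrite E.
have := F (i0, j0); have := F (i0, j1); have := F (i1, j0).
rewrite !kern2 /sec /fib /= zm_j0 zm_j1 /sh /sg.
rewrite (theta_lo (i := 0%N)) // (theta_lo (i := 1%N)) //=.
have N2 := two_neq0; clear E F.
case: e; case: e' => /= H1 H2 H3.
- split=> //; apply/eqP; rewrite -subr_eq0.
    match type of H3 with ?L = ?R => rewrite (_ : p - p' = L - R); [by rewrite H3 subrr | ring] end.
  match type of H1 with ?L = ?R => rewrite (_ : q - q' = L - R); [by rewrite H1 subrr | ring] end.
- exfalso; move/negP: N2; apply.
  match type of H3 with ?L = ?R => match type of H2 with ?L2 = ?R2 =>
  rewrite (_ : 2 = (L - R) - (L2 - R2)); [by rewrite H3 H2 !subrr | ring] end end.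
- exfalso; move/negP: N2; apply.
  match type of H3 with ?L = ?R => match type of H2 with ?L2 = ?R2 =>
  rewrite (_ : 2 = (L2 - R2) - (L - R)); [by rewrite H3 H2 !subrr | ring] end end.
- split=> //; apply/eqP; rewrite -subr_eq0.
    match type of H3 with ?L = ?R => rewrite (_ : p - p' = L - R); [by rewrite H3 subrr | ring] end.
  match type of H1 with ?L = ?R => rewrite (_ : q - q' = L - R); [by rewrite H1 subrr | ring] end.
Qed.


Lemma EX d : ((kern 0 0 true) ^+ d = kern 0 0 (odd d))%g.
Proof.
elim: d => [|d IH]; first by rewrite expg0 kern0.
by rewrite expgSr IH kernM /sg /= oppr0 !addr0 addbT.
Qed.

Lemma aXK j p q e : exists p' q', (a ^+ j * kern p q e = kern p' q' e * a ^+ j)%g.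
Proof.
elim: j p q e => [|j IH] p q e; first by exists p, q; rewrite expg0 mul1g mulg1.
have [p1 [q1 E1]] := IH p q e.
exists q1, (- p1).
by rewrite expgS -mulgA E1 mulgA aK -mulgA.
Qed.

Lemma a2n : (a ^+ (n * 2) = 1)%g.
Proof. by rewrite expgM aN EX kern0. Qed.

Lemma kXb x k : ((kern 0 x false) ^+ k = kern 0 (x *+ k) false)%g.
Proof.
elim: k => [|k IH]; first by rewrite expg0 mulr0n kern0.
by rewrite expgSr IH kernM /sg /= addr0 mulrSr.
Qed.

Lemma b2k k : (b ^+ (2 * k) = kern 0 ((-2) *+ k) false)%g.
Proof. by rewrite expgM expgS expg1 bb kXb. Qed.

Lemma zN2 k : ((-2 : 'Z_m) *+ k) = - ((2 * k)%N%:R).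
Proof. by rewrite mulNrn natrM mulr_natr. Qed.

Definition TT := ('Z_m * 'Z_m * bool * 'I_n * bool)%type.
Definition FF (x : TT) : {perm 'I_n * 'I_m} :=
  (kern x.1.1.1.1 x.1.1.1.2 x.1.1.2 * a ^+ x.1.2 * b ^+ x.2)%g.
Definition SS := [set FF x | x : TT].

Lemma Smem p q e K (f : bool) : (kern p q e * a ^+ K * b ^+ f)%g \in SS.
Proof.
set d := (K %/ n)%N.
have -> : (a ^+ K = kern 0 0 (odd d) * a ^+ (K %% n))%g.
  by rewrite {1}(divn_eq K n) expgD mulnC expgM aN EX.
rewrite mulgA kernM.
apply/imsetP; exists (sg (odd d) p + 0, sg (odd d) q + 0, e (+) odd d, Ordinal (ltn_pmod K n0), f) => //.
Qed.

Lemma ainv : (a ^+ (n * 2).-1 = a^-1)%g.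
Proof.
rewrite -[(a ^+ _)%g]mulg1 -(mulgV a) mulgA -expgSr prednK ?a2n ?mul1g //; lia.
Qed.

Lemma binv : (kern 0 2 false * b = b^-1)%g.
Proof.
rewrite -[(_ * b)%g]mulg1 -(mulgV b) mulgA -(mulgA _ b b) bb kernM /sg /= addr0 subrr.
by rewrite kern0 mul1g.
Qed.

Lemma ba : (b * a = a ^+ (n * 2).-1 * (kern 0 2 false * b))%g.
Proof.
rewrite ainv binv.
have H := abab.
apply: (mulgI a); apply: (mulIg b).
rewrite !mulgA (mulgV a) mul1g (mulVg b).
by rewrite !mulgA in H.
Qed.

Lemma Sa g : g \in SS -> (g * a)%g \in SS.
Proof.
case/imsetP => [[[[[p q] e] k] f] _ ->]; rewrite /FF /=.
case: f => /=.
- have E : (kern p q e * a ^+ k * (b * a) =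
     kern p q e * (a ^+ (k + (n*2).-1) * kern 0 2 false) * b)%g.
    by rewrite ba expgD !mulgA.
  rewrite expg1 -mulgA E.
  have [p' [q' ->]] := aXK (k + (n * 2).-1) 0 2 false.
  rewrite mulgA kernM -[(b)%g]expg1; exact: (Smem _ _ _ _ true).
- rewrite expg0 mulg1 -mulgA -expgSr.
  by have := Smem p q e k.+1 false; rewrite /= expg0 mulg1.
Qed.

Lemma Sb g : g \in SS -> (g * b)%g \in SS.
Proof.
case/imsetP => [[[[[p q] e] k] f] _ ->]; rewrite /FF /=.
case: f => /=.
- rewrite expg1 -mulgA bb -mulgA.
  have [p' [q' ->]] := aXK k 0 (-2) false.
  rewrite mulgA kernM.
  by have := Smem (sg false p + p') (sg false q + q') (e (+) false) k false; rewrite /= expg0 mulg1.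
- by have := Smem p q e k true; rewrite /= expg0 mulg1 expg1.
Qed.

Notation G := (<<[set a; b]>>)%g.
Lemma aG : a \in G. Proof. by rewrite mem_gen // !inE eqxx. Qed.
Lemma bG : b \in G. Proof. by rewrite mem_gen // !inE eqxx orbT. Qed.

Lemma m1eq : ((m.-1)%:R : 'Z_m) = -1.
Proof.
have := pchar_Zp m1; rewrite -(prednK m0) mulrSr => /eqP.
by rewrite addr_eq0 => /eqP.
Qed.

Lemma kernG p q e : kern p q e \in G.
Proof.
have K0e : kern 0 0 e \in G.
  by case: e; [rewrite -aN; apply: groupX; exact: aG | rewrite kern0 group1].
have K01 : kern 0 1 false \in G.
  have Hh : (-2 : 'Z_m) *+ m./2 = 1.
    by rewrite zN2 (_ : (2 * m./2 = m.-1)%N) ?m1eq ?opprK //; lia.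
  by rewrite -Hh -b2k; apply: groupX; exact: bG.
have K0q : forall q, kern 0 q false \in G.
  move=> q0; rewrite -(natr_Zp q0) -kXb; exact: groupX.
have Kp0 : kern p 0 false \in G.
  have := aK 0 p false; rewrite oppr0 => E.
  rewrite (_ : kern p 0 false = a * kern 0 p false * a^-1)%g; last by rewrite E mulgK.
  by rewrite !groupM ?groupV ?aG.
have -> : kern p q e = (kern 0 0 e * (kern p 0 false * kern 0 q false))%g.
  by rewrite !kernM /sg /= addr0 !add0r addbF.
by rewrite !groupM.
Qed.

Lemma SG : SS \subset G.
Proof.
apply/subsetP => x /imsetP [y _ ->]; rewrite /FF.
by rewrite !groupM ?groupX ?kernG ?aG ?bG.
Qed.

Lemma GS : G \subset SS.
Proof.
apply: gen_closed.
  by have := Smem 0 0 false 0 false; rewrite /= !expg0 !mulg1 kern0.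
move=> s x Hs; case/set2P => ->; [exact: Sa | exact: Sb].
Qed.

Lemma aXfib k v : fib ((a ^+ k)%g v) = ((fib v + k) %% n)%N.
Proof.
elim: k => [|k IH]; first by rewrite expg0 perm1 addn0 modn_small ?fib_lt.
by rewrite expgSr permM a1 IH -addn1 modnDml addn1 addnS.
Qed.

Lemma fibFF (x : TT) v : fib (FF x v) =
  if x.2 then ((n - (fib v + x.1.2) %% n) %% n)%N else ((fib v + x.1.2) %% n)%N.
Proof.
rewrite /FF !permM; case: x.2 => /=; first by rewrite expg1 b1 aXfib kern1.
by rewrite expg0 perm1 aXfib kern1.
Qed.

Lemma modBle r : (r <= n)%N -> ((n - r) %% n = if r == 0 then 0 else n - r)%N.
Proof.
move=> H; case: eqP => [->|ne]; first by rewrite subn0 modnn.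
case: (ltnP r n) => h; first by rewrite modn_small; lia.
have -> : r = n by lia.
by rewrite subnn mod0n.
Qed.

Lemma FF_inj : injective FF.
Proof.
move=> [[[[p q] e] k] f] [[[[p' q'] e'] k'] f'] E.
have F v : FF (p, q, e, k, f) v = FF (p', q', e', k', f') v by rewrite E.
have h0 := congr1 fib (F (i0, j0)); have h1 := congr1 fib (F (i1, j0)).
rewrite !fibFF /= in h0 h1.
have Hk := ltn_ord k; have Hk' := ltn_ord k'.
rewrite /fib /= add0n add1n (modn_small Hk) (modn_small Hk') (modS_small Hk) (modS_small Hk') in h0 h1.
have [ek ef] : (k = k' :> nat) /\ f = f'.
  move: h0 h1; clear E F; case: f; case: f' => /=; splitif; rewrite ?modBle; try lia; splitif; lia.
have ek' : k = k' by apply: val_inj.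
subst k' f'.
move: E; rewrite /FF /= => /mulIg /mulIg /kern_inj [-> -> ->] //.
Qed.

Lemma cardG : #|G| = (4 * m ^ 2 * n)%N.
Proof.
have -> : G = SS by apply/eqP; rewrite eqEsubset GS SG.
rewrite /SS card_imset; last exact: FF_inj.
rewrite /TT !card_prod card_ord card_bool card_ord Zp_cast ?m1 //.
rewrite !expnS expn0; lia.
Qed.

Lemma ord_a : #[a]%g = (2 * n)%N.
Proof.
have Hd := expg_order a; set d := #[a]%g in Hd *.
have d0 : (0 < d)%N := order_gt0 a.
have dd : (d %| n * 2)%N by rewrite order_dvdn a2n.
have nd : (n %| d)%N.
  have := congr1 (fun g : {perm 'I_n * 'I_m} => fib (g (i0, j0))) Hd.
  by rewrite /= aXfib perm1 /fib /= add0n /dvdn => ->.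
case/dvdnP: nd => l Hl.
have ol : odd l = false.
  by move: Hd; rewrite Hl mulnC expgM aN EX -kern0 => /kern_inj [_ _ ->].
have le : (d <= n * 2)%N by apply: dvdn_leq; lia.
have l2 : (2 <= l)%N.
  case: l Hl ol => [|[|l]] Hl ol //; by rewrite Hl in d0.
have : (2 * n <= l * n)%N by rewrite leq_mul2r l2 orbT.
lia.
Qed.

Lemma ord_b : #[b]%g = (2 * m)%N.
Proof.
have Hd := expg_order b; set d := #[b]%g in Hd *.
have d0 : (0 < d)%N := order_gt0 b.
have dd : (d %| 2 * m)%N.
  by rewrite order_dvdn b2k zN2 natrM pchar_Zp ?m1 // mulr0 oppr0 kern0.
have ev : odd d = false.
  apply/negbTE/negP => od.
  move: Hd; rewrite -(odd_double_half d) od add1n expgSr -mul2n b2k => H.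
  have := congr1 (fun g : {perm 'I_n * 'I_m} => fib (g (i1, j0))) H.
  rewrite /= permM b1 kern1 perm1 /fib /= modBle; last lia.
  case: eqP => //; lia.
have hd : (m %| d./2)%N.
  move: Hd; rewrite -{1}(odd_double_half d) ev add0n -mul2n b2k -kern0 zN2.
  move=> /kern_inj [_ /eqP + _]; rewrite oppr_eq0 => /eqP /(congr1 (@nat_of_ord _)).
  rewrite val_Zp_nat ?m1 // => H.
  have cop : coprime m 2 by rewrite coprimen2.
  by rewrite -(Gauss_dvdr (d./2) cop) /dvdn H.
case/dvdnP: hd => c Hc.
have le : (d <= 2 * m)%N by apply: dvdn_leq; lia.
have := odd_double_half d; rewrite ev add0n => dE.
have c1 : (1 <= c)%N by case: c Hc => // Hc; lia.
have : (1 * m <= c * m)%N by rewrite leq_mul2r c1 orbT.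
lia.
Qed.

Lemma ord_ab : #[(a * b)%g]%g = 2%N.
Proof.
have dd : (#[(a * b)%g]%g %| 2)%N by rewrite order_dvdn expgS expg1 abab.
have ne1 : #[(a * b)%g]%g != 1%N.
  rewrite order_eq1; apply/eqP => H.
  have := congr1 (fun g : {perm 'I_n * 'I_m} => fib (g (i0, j0))) H.
  rewrite /= permM b1 a1 perm1 /fib /= modBle; last by rewrite modn_small; lia.
  rewrite modn_small; last lia.
  case: eqP => //; lia.
have le : (#[(a * b)%g]%g <= 2)%N by apply: dvdn_leq.
have := order_gt0 (a * b)%g; move: ne1; lia.
Qed.

End Main.

Theorem lemma5p4 (m s : nat) :
  3 <= m -> odd m -> 0 < s -> 2 %| s -> ~~ (4 %| s) ->
  let n := s * m in
  [/\ #[sigma1 n m]%g = 2 * n,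
      #[sigma2 n m]%g = 2 * m,
      #[(sigma1 n m * sigma2 n m)%g]%g = 2
    & #|<<[set sigma1 n m; sigma2 n m]>>%g| = 4 * m ^ 2 * n].
Proof.
move=> Hm Hodd s0 s2 s4 n.
have Hs4 : s %% 4 = 2 by lia.
have Hn : n %% 4 = 2.
  rewrite /n -modnMm Hs4.
  have : m %% 4 = 1 \/ m %% 4 = 3 by lia.
  by case=> ->.
have Hn3 : 2 < n by rewrite /n; nia.
split.
- exact: ord_a.
- exact: ord_b.
- exact: ord_ab.
- exact: cardG.
Qed.
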